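(* Let $\mathcal{K}$ be a finite simplicial complex with simplices $\sigma_1,\ldots,\sigma_N$, indexed so that $i<j$ whenever $\sigma_i$ is a proper face of $\sigma_j$. Let $B$ be a triangulated surface and let $f:\mathcal{K}\times B\to\mathbb{R}$ be a piecewise-linear fibered filtration function, with induced simplex indexing $\text{idx}_f$. Let $(v,w)$ be a line segment in $B$ (with endpoints $v,w$) that is not on the boundary of $B$, and let $(\sigma_i,\sigma_j)$ be a pair of distinct simplices of $\mathcal{K}$. 1. If $v$ and $w$ are not the two endpoints of an edge of $B$, let $\Delta$ be the unique triangle of $B$ containing $(v,w)$. Then $(\sigma_i,\sigma_j)$ swaps along $(v,w)$ if and only if $(v,w)$ is detected in $\Delta$ for the pair $(\sigma_i,\sigma_j)$. 2. If $v$ and $w$ are the two endpoints of an edge $e$ of $B$, let $\Delta_1,\Delta_2$ be the two triangles of $B$ adjacent to $e$. Then $(\sigma_i,\sigma_j)$ swaps along $(v,w)$ if and only if $(v,w)$ is detected for the pair $(\sigma_i,\sigma_j)$ in exactly one of $\Delta_1,\Delta_2$.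
   Context: A filtration function on a simplicial complex $\mathcal{K}$ is a function $g:\mathcal{K}\to\mathbb{R}$ with $g(\tau)\le g(\sigma)$ whenever $\tau$ is a face of $\sigma$. A piecewise-linear fibered filtration function with base $B$ (a simplicial complex) is a function $f:\mathcal{K}\times B\to\mathbb{R}$ such that $f(\cdot,p)$ is a filtration function for each $p\in B$ and $f(\sigma,\cdot)$ is linear (affine) on each simplex of $B$ for each $\sigma\in\mathcal{K}$. The induced simplex indexing $\text{idx}_f:\mathcal{K}\times B\to\{1,\ldots,N\}$ is the unique function, bijective in the first argument for each $p$, such that $\text{idx}_f(\sigma_a,p)<\text{idx}_f(\sigma_b,p)$ if either $f(\sigma_a,p)<f(\sigma_b,p)$, or $f(\sigma_a,p)=f(\sigma_b,p)$ and $a<b$. Write $I(\sigma,\tau)=\{p\in B: f(\sigma,p)=f(\tau,p)\}$. Two simplices $\sigma,\tau$ have different relative orders at points $p_1,p_2$ if $(\text{idx}_f(\sigma,p_1)-\text{idx}_f(\tau,p_1))(\text{idx}_f(\sigma,p_2)-\text{idx}_f(\tau,p_2))<0$. Swapping: if $I(\sigma_i,\sigma_j)\cap\Delta$ is a line segment $\ell$ cutting a triangle $\Delta$ into two polygons $Q_1,Q_2$, then $(\sigma_i,\sigma_j)$ swaps along $\ell$ if $\sigma_i,\sigma_j$ have different relative orders at every $p_1\in Q_1$, $p_2\in Q_2$. If $e$ is an edge of $B$ with $e\subseteq I(\sigma_i,\sigma_j)$ and adjacent triangles $\Delta_1,\Delta_2$, then $(\sigma_i,\sigma_j)$ swaps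 along $e$ if $\sigma_i,\sigma_j$ have different relative orders at every $p_1\in\Delta_1\setminus e$, $p_2\in\Delta_2\setminus e$. Detection: for an edge $e$ of $B$ with endpoints $a,b$, a point $v\in e$ is detected along $e$ for the pair $(\sigma,\tau)$ if $\sigma,\tau$ have different relative orders at $a$ and $b$ and $v$ is the (unique) point of $e$ at which the relative order of $\sigma$ and $\tau$ changes, i.e. where $f(\sigma,v)=f(\tau,v)$. A line segment $(v,w)$ is detected in a triangle $\Delta$ for the pair $(\sigma,\tau)$ if $v$ is detected along some edge $e_1$ of $\Delta$ for $(\sigma,\tau)$ and $w$ is detected along some edge $e_2$ of $\Delta$ for $(\sigma,\tau)$. *)

(* Defs.v *)
From HB Require Import structures.
From mathcomp Require Import all_boot all_order all_algebra.
Set Implicit Arguments. Unset Strict Implicit. Unset Printing Implicit Defensive.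
Import Order.TTheory GRing.Theory Num.Theory.
Local Open Scope ring_scope.

(* Simplices sigma_0, ..., sigma_(N-1) given as nonempty vertex sets;     *)
Definition indexed_complex (U : finType) (N : nat) (sig : 'I_N -> {set U}) :=
  [/\ injective sig,
      (forall i, sig i != set0),
      (forall i (S : {set U}), S != set0 -> S \subset sig i ->
          exists j, sig j = S)
    & (forall i j, sig i \proper sig j -> (i < j)%N)].

(* B is given by its set T of triangles (3-element vertex sets); its     *)
(* simplices are the nonempty subsets of triangles.                      *)
Definition is_vertex (V : finType) (T : {set {set V}}) (x : V) :=
  exists2 D, D \in T & x \in D.

Definition is_edge (V : finType) (T : {set {set V}}) (e : {set V}) :=
  #|e| = 2 /\ exists2 D, D \in T & e \subset D.

Definition link_rel (V : finType) (T : {set {set V}}) (x : V) : rel V :=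
  fun y z => [set x; y; z] \in T.

Definition triangulated_surface (V : finType) (T : {set {set V}}) :=
  [/\ (forall D, D \in T -> #|D| = 3),
      (forall e : {set V}, #|e| = 2 -> (#|[set D in T | e \subset D]| <= 2)%N)
    & (* the link of every vertex is connected (hence a path or a cycle) *)
      (forall x y z, is_vertex T x -> y != x -> z != x ->
          is_edge T [set x; y] -> is_edge T [set x; z] ->
          connect (link_rel T x) y z)].

(* ---------- Points of B in barycentric coordinates ---------- *)
Section Pts.
Variables (R : realFieldType) (V : finType).

Definition in_simplex (S : {set V}) (p : V -> R) :=
  [/\ (forall x, 0 <= p x), \sum_(x : V) p x = 1 & (forall x, p x != 0 -> x \in S)].

Definition in_B (T : {set {set V}}) (p : V -> R) :=
  exists2 D, D \in T & in_simplex D p.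

Definition vpt (a : V) : V -> R := fun x => (x == a)%:R.

Definition on_seg (v w p : V -> R) :=
  exists t : R, [/\ 0 <= t, t <= 1 & forall x, p x = (1 - t) * v x + t * w x].

(* Signed side of p w.r.t. the line through v and w, inside the triangle *)
(* {a,b,c} (determinant of the barycentric coordinate vectors).          *)
Definition side (a b c : V) (v w p : V -> R) : R :=
  p a * (v b * w c - v c * w b) - p b * (v a * w c - v c * w a)
  + p c * (v a * w b - v b * w a).
End Pts.

Section Filt.
Variables (R : realFieldType) (U V : finType) (N : nat) (sig : 'I_N -> {set U}).
Variable (T : {set {set V}}).
Variable f : 'I_N -> (V -> R) -> R.

Definition pl_fibered_filtration :=
  (forall p, in_B T p -> forall i j, sig i \subset sig j -> f i p <= f j p) /\
  (forall i D, D \in T -> forall p q, in_simplex D p -> in_simplex D q ->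
     forall t : R, 0 <= t -> t <= 1 ->
       f i (fun x => (1 - t) * p x + t * q x) = (1 - t) * f i p + t * f i q).

(* induced simplex indexing idx_f (values in 1..N) *)
Definition idx (a : 'I_N) (p : V -> R) : nat :=
  #|[set b : 'I_N | (f b p < f a p) || ((f b p == f a p) && (b < a)%N)]|.+1.

Definition diff_order (i j : 'I_N) (p1 p2 : V -> R) : Prop :=
  (((idx i p1)%:Z - (idx j p1)%:Z) * ((idx i p2)%:Z - (idx j p2)%:Z) < 0)%R.

Definition detected_edge (i j : 'I_N) (a b : V) (v : V -> R) :=
  [/\ diff_order i j (vpt R a) (vpt R b), in_simplex [set a; b] v & f i v = f j v].

Definition detected_tri (i j : 'I_N) (a b c : V) (v w : V -> R) :=
  (detected_edge i j a b v \/ detected_edge i j b c v \/ detected_edge i j a c v) /\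
  (detected_edge i j a b w \/ detected_edge i j b c w \/ detected_edge i j a c w).

(* (sigma_i, sigma_j) swaps along the segment (v,w) cutting the triangle *)
(* Delta = {a,b,c} into two polygons Q1 (side > 0) and Q2 (side < 0).    *)
Definition swaps_tri (i j : 'I_N) (a b c : V) (v w : V -> R) :=
  let D := [set a; b; c] in
  [/\ (forall p, in_simplex D p -> (f i p = f j p <-> on_seg v w p)),
      (exists p, in_simplex D p /\ 0 < side a b c v w p),
      (exists p, in_simplex D p /\ side a b c v w p < 0)
    & (forall p1 p2, in_simplex D p1 -> in_simplex D p2 ->
         0 < side a b c v w p1 -> side a b c v w p2 < 0 -> diff_order i j p1 p2)].

(* (sigma_i, sigma_j) swaps along the edge {a,b}, whose adjacent        *)
(* triangles are {a,b,c1} and {a,b,c2}.                                 *)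
Definition swaps_edge (i j : 'I_N) (a b c1 c2 : V) :=
  (forall p, in_simplex [set a; b] p -> f i p = f j p) /\
  (forall p1 p2, in_simplex [set a; b; c1] p1 -> ~ in_simplex [set a; b] p1 ->
     in_simplex [set a; b; c2] p2 -> ~ in_simplex [set a; b] p2 ->
     diff_order i j p1 p2).
End Filt.

(* Main.v *)
Require Import Defs.
From HB Require Import structures.
From mathcomp Require Import all_boot all_order all_algebra.
From mathcomp Require Import ring lra zify.
From Stdlib Require Import FunctionalExtensionality.
Set Implicit Arguments. Unset Strict Implicit. Unset Printing Implicit Defensive.
Import Order.TTheory GRing.Theory Num.Theory.
Local Open Scope ring_scope.

Section Basics.
Variables (R : realFieldType) (V : finType).

Definition tri3 (a b c : V) (p : V -> R) :=
  [/\ 0 <= p a, 0 <= p b, 0 <= p c, p a + p b + p c = 1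
    & forall x, x != a -> x != b -> x != c -> p x = 0].

Lemma card3_distinct (a b c : V) : #|[set a; b; c]| = 3%N ->
  [/\ a != b, b != c & a != c].
Proof.
rewrite -setUA cardsU1 cards2 !inE.
by case: (a == b); case: (b == c); case: (a == c).
Qed.

Lemma in_tri3 (a b c : V) (p : V -> R) : a != b -> b != c -> a != c ->
  in_simplex [set a; b; c] p <-> tri3 a b c p.
Proof.
move=> ab bc ac.
have Hs : forall q : V -> R, (forall x, x != a -> x != b -> x != c -> q x = 0) ->
   \sum_(x : V) q x = q a + q b + q c.
  move=> q Hq; rewrite (bigD1 a) //= (bigD1 b) 1?eq_sym //= (bigD1 c) /=; last first.
    by rewrite eq_sym ac eq_sym bc.
  rewrite big1 ?addr0 ?addrA // => x /andP[/andP[xa xb] xc]; exact: Hq.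
split.
  case=> H0 H1 H2.
  have Hz : forall x, x != a -> x != b -> x != c -> p x = 0.
    move=> x xa xb xc; apply/eqP; apply/negPn/negP => /H2; rewrite !inE.
    by rewrite (negbTE xa) (negbTE xb) (negbTE xc).
  by split => //; rewrite -Hs.
case=> H0 H1 H2 H3 H4; split.
- move=> x; case: (x =P a) => [->//|/eqP xa]; case: (x =P b) => [->//|/eqP xb].
  case: (x =P c) => [->//|/eqP xc]; by rewrite H4.
- by rewrite Hs.
- move=> x; rewrite !inE; apply: contraR; case/norP=> /norP[xa xb] xc.
  by rewrite H4.
Qed.

Lemma in_seg2 (a b : V) (p : V -> R) : a != b ->
  in_simplex [set a; b] p <->
  [/\ 0 <= p a, 0 <= p b, p a + p b = 1 & forall x, x != a -> x != b -> p x = 0].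
Proof.
move=> ab.
have Hs : forall q : V -> R, (forall x, x != a -> x != b -> q x = 0) ->
   \sum_(x : V) q x = q a + q b.
  move=> q Hq; rewrite (bigD1 a) //= (bigD1 b) 1?eq_sym //=.
  rewrite big1 ?addr0 ?addrA // => x /andP[xa xb]; exact: Hq.
split.
  case=> H0 H1 H2.
  have Hz : forall x, x != a -> x != b -> p x = 0.
    move=> x xa xb; apply/eqP; apply/negPn/negP => /H2; rewrite !inE.
    by rewrite (negbTE xa) (negbTE xb).
  by split => //; rewrite -Hs.
case=> H0 H1 H3 H4; split.
- move=> x; case: (x =P a) => [->//|/eqP xa]; case: (x =P b) => [->//|/eqP xb].
  by rewrite H4.
- by rewrite Hs.
- move=> x; rewrite !inE; apply: contraR; case/norP=> xa xb.
  by rewrite H4.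
Qed.

Lemma vptE (a x : V) : vpt R a x = (x == a)%:R.
Proof. by []. Qed.

Lemma vpt_tri3 (a b c : V) : a != b -> b != c -> a != c -> tri3 a b c (vpt R a).
Proof.
move=> ab bc ac; rewrite /tri3 !vptE eqxx eq_sym (negbTE ab) eq_sym (negbTE ac).
split; rewrite /= ?ler01 ?lexx //; first lra.
by move=> x xa _ _; rewrite vptE (negbTE xa).
Qed.

Lemma tri3_rot (a b c : V) (p : V -> R) : tri3 a b c p -> tri3 b c a p.
Proof.
case=> H1 H2 H3 H4 H5; split => //; first lra.
by move=> x xb xc xa; apply: H5.
Qed.

Lemma tri3_swap (a b c : V) (p : V -> R) : tri3 a b c p -> tri3 b a c p.
Proof.
case=> H1 H2 H3 H4 H5; split => //; first lra.
by move=> x xb xa xc; apply: H5.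
Qed.

End Basics.
Section Idx.
Variables (R : realFieldType) (V : finType) (N : nat) (f : 'I_N -> (V -> R) -> R).

Definition ltb (x y : R) (m n : nat) := (x < y) || ((x == y) && (m < n)%N).

Lemma ltb_trans x y z m n k : ltb x y m n -> ltb y z n k -> ltb x z m k.
Proof.
rewrite /ltb => /orP[h|/andP[/eqP e h]] /orP[h'|/andP[/eqP e' h']]; subst.
- by rewrite (lt_trans h h').
- by rewrite h.
- by rewrite h'.
- by rewrite eqxx (ltn_trans h h') orbT.
Qed.

Lemma ltb_irr x m : ltb x x m m = false.
Proof. by rewrite /ltb ltxx ltnn andbF. Qed.

Lemma ltb_total x y m n : m != n -> ltb x y m n || ltb y x n m.
Proof.
rewrite /ltb => mn; case: (ltgtP x y) => //= e; subst.
move: mn; rewrite neq_ltn => /orP[]->; by rewrite ?orbT.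
Qed.

Lemma ltb_asym x y m n : ltb x y m n -> ltb y x n m = false.
Proof.
move=> h; apply/negP => h'; have := ltb_trans h h'; by rewrite ltb_irr.
Qed.

Lemma idx_lt_strict (i j : 'I_N) p : ltb (f i p) (f j p) i j -> (idx f i p < idx f j p)%N.
Proof.
move=> h; rewrite /idx ltnS; apply: proper_card; apply/properP; split.
  apply/subsetP => b; rewrite !inE => hb.
  by have := ltb_trans hb h.
exists i; rewrite !inE; first exact: h.
by rewrite ltxx eqxx ltnn.
Qed.

Lemma idx_ltE (i j : 'I_N) p : i != j ->
  (idx f i p < idx f j p)%N = ltb (f i p) (f j p) i j.
Proof.
move=> ij; case h: (ltb (f i p) (f j p) i j); first exact: idx_lt_strict.
have := ltb_total (f i p) (f j p) ij; rewrite h /= => h'.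
have := idx_lt_strict h'; move=> /ltnW; by rewrite leqNgt => /negbTE.
Qed.

Lemma diff_orderE (i j : 'I_N) p q : i != j ->
  diff_order f i j p q <-> ltb (f i p) (f j p) i j != ltb (f i q) (f j q) i j.
Proof.
move=> ij; rewrite /diff_order -!idx_ltE //.
have ne : forall r, idx f i r <> idx f j r.
  move=> r e; case h: (ltb (f i r) (f j r) i j).
    by have := idx_lt_strict h; rewrite e ltnn.
  have := ltb_total (f i r) (f j r) ij; rewrite h /= => h'.
  by have := idx_lt_strict h'; rewrite e ltnn.
have := ne p; have := ne q.
move: (idx f i p) (idx f j p) (idx f i q) (idx f j q) => a b c d hcd hab.
case: (ltngtP a b) => hab'; case: (ltngtP c d) => hcd' //=; split => // H; nia.
Qed.
End Idx.
Section Affine.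
Variables (R : realFieldType) (V : finType) (N : nat) (T : {set {set V}}).
Variable f : 'I_N -> (V -> R) -> R.
Hypothesis Hlin : forall i D, D \in T -> forall p q, in_simplex D p -> in_simplex D q ->
     forall t : R, 0 <= t -> t <= 1 ->
       f i (fun x => (1 - t) * p x + t * q x) = (1 - t) * f i p + t * f i q.

Lemma affine_edge (a b c : V) k (r : V -> R) : a != b -> b != c -> a != c ->
  [set a; b; c] \in T -> tri3 a b c r -> r a = 0 ->
  f k r = r b * f k (vpt R b) + r c * f k (vpt R c).
Proof.
move=> ab bc ac HT [r1 r2 r3 r4 r5] ra.
have E : r = (fun x => (1 - r c) * vpt R b x + r c * vpt R c x).
  apply: functional_extensionality => x; rewrite !vptE.
  case: (x =P b) => [->|/eqP xb]; first by rewrite (negbTE bc) /=; lra.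
  case: (x =P c) => [->|/eqP xc]; first by rewrite /=; lra.
  case: (x =P a) => [->|/eqP xa]; first by rewrite ra /=; lra.
  by rewrite r5 //= ; lra.
rewrite {1}E (Hlin k HT) //; last by lra.
- have e : 1 - r c = r b by lra.
  by rewrite e.
- apply: (in_tri3 (R:=R) _ ab bc ac).2; do 2 apply: tri3_rot;
  apply: vpt_tri3; by rewrite // eq_sym.
- apply: (in_tri3 (R:=R) _ ab bc ac).2; apply: tri3_rot;
  apply: vpt_tri3; by rewrite // eq_sym.
Qed.
Lemma affine3 (a b c : V) k (p : V -> R) : a != b -> b != c -> a != c ->
  [set a; b; c] \in T -> tri3 a b c p ->
  f k p = p a * f k (vpt R a) + p b * f k (vpt R b) + p c * f k (vpt R c).
Proof.
move=> ab bc ac HT [p1 p2 p3 p4 p5].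
have [pa1|pa1] := eqVneq (p a) 1.
  have pb : p b = 0 by lra.
  have pc : p c = 0 by lra.
  have E : p = vpt R a.
    apply: functional_extensionality => x; rewrite vptE.
    case: (x =P a) => [->|/eqP xa] /=; first by [].
    case: (x =P b) => [->|/eqP xb] /=; first by [].
    case: (x =P c) => [->|/eqP xc] /=; first by [].
    by rewrite p5.
  by rewrite {1}E pa1 pb pc; ring.
have lt1 : p a < 1 by rewrite lt_neqAle pa1 /=; lra.
have ne : 1 - p a != 0 by rewrite subr_eq0 eq_sym.
pose q := fun x => if x == a then 0 else p x / (1 - p a).
have qt : tri3 a b c q.
  rewrite /q; split; rewrite ?eqxx 1?eq_sym ?(negbTE ab) 1?eq_sym ?(negbTE ac) ?lexx //.
  - by rewrite divr_ge0 //; lra.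
  - by rewrite eq_sym (negbTE ac) divr_ge0 //; lra.
  - rewrite add0r -mulrDl.
    have -> : p b + p c = 1 - p a by lra.
    by rewrite divff.
  - by move=> x xa xb xc; rewrite (negbTE xa) (p5 x) ?mul0r.
have E : p = (fun x => (1 - p a) * q x + p a * vpt R a x).
  apply: functional_extensionality => x; rewrite /q vptE.
  case: (x =P a) => [->|/eqP xa] /=; first by ring.
  by rewrite mulrC divfK //; ring.
have Iq : in_simplex [set a; b; c] q by apply: (in_tri3 (R:=R) _ ab bc ac).2.
have Ia : in_simplex [set a; b; c] (vpt R a).
  by apply: (in_tri3 (R:=R) _ ab bc ac).2; apply: vpt_tri3.
have t1 : p a <= 1 by lra.
rewrite {1}E (Hlin k HT Iq Ia p1 t1).
rewrite (@affine_edge a b c k q) //; last by rewrite /q eqxx.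
rewrite /q eq_sym (negbTE ab) eq_sym (negbTE ac) /=.
field. exact: ne.
Qed.
End Affine.
Section RealLemmas.
Variable R : realFieldType.

Definition Bt (t : bool) (g : R) := (g < 0) || ((g == 0) && t).

Lemma Bpos t g : 0 < g -> Bt t g = false.
Proof. by move=> h; rewrite /Bt ltNge (ltW h) /= gt_eqF. Qed.
Lemma Bneg t g : g < 0 -> Bt t g = true.
Proof. by move=> h; rewrite /Bt h. Qed.
Lemma Bzero t : Bt t 0 = t.
Proof. by rewrite /Bt ltxx eqxx. Qed.
Lemma Bscale t k g : 0 < k -> Bt t (k * g) = Bt t g.
Proof.
move=> hk; case: (ltgtP g 0) => hg.
- by rewrite !Bneg // pmulr_rlt0.
- by rewrite !Bpos // pmulr_rgt0.
- by rewrite hg mulr0.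
Qed.

Lemma signs_pos (va vb vc wa wb wc ga gb gc : R) :
  0 <= va -> 0 <= vb -> 0 <= vc -> 0 <= wa -> 0 <= wb -> 0 <= wc ->
  va * ga + vb * gb + vc * gc = 0 -> wa * ga + wb * gb + wc * gc = 0 ->
  ~ (ga = 0 /\ gb = 0 /\ gc = 0) ->
  ~ (va = 0 /\ wa = 0) -> ~ (vb = 0 /\ wb = 0) -> ~ (vc = 0 /\ wc = 0) ->
  (ga < 0 \/ gb < 0 \/ gc < 0).
Proof.
move=> h1 h2 h3 h4 h5 h6 hv hw nz na nb nc.
case: (ltP ga 0) => a0; first by left.
case: (ltP gb 0) => b0; first by right; left.
case: (ltP gc 0) => c0; first by right; right.
exfalso.
have p1 : 0 <= va * ga by apply: mulr_ge0.
have p2 : 0 <= vb * gb by apply: mulr_ge0.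
have p3 : 0 <= vc * gc by apply: mulr_ge0.
have q1 : 0 <= wa * ga by apply: mulr_ge0.
have q2 : 0 <= wb * gb by apply: mulr_ge0.
have q3 : 0 <= wc * gc by apply: mulr_ge0.
have e1 : va * ga = 0 by lra.
have e2 : vb * gb = 0 by lra.
have e3 : vc * gc = 0 by lra.
have f1 : wa * ga = 0 by lra.
have f2 : wb * gb = 0 by lra.
have f3 : wc * gc = 0 by lra.
move: e1 e2 e3 f1 f2 f3 => /eqP; rewrite mulf_eq0 => /orP[/eqP e1|/eqP e1];
 move=> /eqP; rewrite mulf_eq0 => /orP[/eqP e2|/eqP e2];
 move=> /eqP; rewrite mulf_eq0 => /orP[/eqP e3|/eqP e3];
 move=> /eqP; rewrite mulf_eq0 => /orP[/eqP f1|/eqP f1];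
 move=> /eqP; rewrite mulf_eq0 => /orP[/eqP f2|/eqP f2];
 move=> /eqP; rewrite mulf_eq0 => /orP[/eqP f3|/eqP f3]; tauto.
Qed.

Lemma signs (va vb vc wa wb wc ga gb gc : R) :
  0 <= va -> 0 <= vb -> 0 <= vc -> 0 <= wa -> 0 <= wb -> 0 <= wc ->
  va * ga + vb * gb + vc * gc = 0 -> wa * ga + wb * gb + wc * gc = 0 ->
  ~ (ga = 0 /\ gb = 0 /\ gc = 0) ->
  ~ (va = 0 /\ wa = 0) -> ~ (vb = 0 /\ wb = 0) -> ~ (vc = 0 /\ wc = 0) ->
  (0 < ga \/ 0 < gb \/ 0 < gc) /\ (ga < 0 \/ gb < 0 \/ gc < 0).
Proof.
move=> h1 h2 h3 h4 h5 h6 hv hw nz na nb nc; split; last exact: (signs_pos h1 h2 h3 h4 h5 h6 hv hw nz na nb nc).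
have := @signs_pos va vb vc wa wb wc (- ga) (- gb) (- gc) h1 h2 h3 h4 h5 h6.
rewrite !oppr_lt0; apply => //; try lra.
Qed.

Lemma pick t (gx gy gz vx vy : R) : 0 <= vx -> 0 <= vy -> vx + vy = 1 ->
  vx * gx + vy * gy = 0 ->
  (0 < gx \/ 0 < gy \/ 0 < gz) -> (gx < 0 \/ gy < 0 \/ gz < 0) ->
  Bt t gx != Bt t gy \/ (vy = 0 /\ Bt t gx != Bt t gz) \/ (vx = 0 /\ Bt t gy != Bt t gz).
Proof.
move=> h1 h2 h3 h4 hp hn.
have [vx0|vx0] := eqVneq vx 0.
  have vy1 : vy = 1 by lra.
  have gy0 : gy = 0 by move: h4; rewrite vx0 vy1 mul0r add0r mul1r.
  rewrite gy0 Bzero.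
  have gxz : (0 < gx /\ gz < 0) \/ (gx < 0 /\ 0 < gz).
    rewrite gy0 ltxx in hp hn; lra.
  case: gxz => [[a b]|[a b]]; rewrite ?(Bpos _ a) ?(Bneg _ a) ?(Bpos _ b) ?(Bneg _ b);
    case: t; first [by left | by right; right].
have [vy0|vy0] := eqVneq vy 0.
  have vx1 : vx = 1 by lra.
  have gx0 : gx = 0 by move: h4; rewrite vy0 vx1 mul0r addr0 mul1r.
  rewrite gx0 Bzero.
  have gyz : (0 < gy /\ gz < 0) \/ (gy < 0 /\ 0 < gz).
    rewrite gx0 ltxx in hp hn; lra.
  case: gyz => [[a b]|[a b]]; rewrite ?(Bpos _ a) ?(Bneg _ a) ?(Bpos _ b) ?(Bneg _ b);
    case: t; first [by left | by right; left].
left.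
have vxp : 0 < vx by rewrite lt_neqAle eq_sym vx0.
have vyp : 0 < vy by rewrite lt_neqAle eq_sym vy0.
case: (ltgtP gx 0) => a.
- have b : 0 < gy by nra.
  by rewrite (Bneg _ a) (Bpos _ b).
- have b : gy < 0 by nra.
  by rewrite (Bneg _ b) (Bpos _ a).
- exfalso; have b : gy = 0 by move: h4; rewrite a mulr0 add0r => /eqP; rewrite mulf_eq0 (negbTE vy0) => /eqP.
  rewrite a b ltxx in hp hn; lra.
Qed.

Lemma cross0 (va vb vc wa wb wc : R) :
  vb * wc - vc * wb = 0 -> va * wc - vc * wa = 0 -> va * wb - vb * wa = 0 ->
  va + vb + vc = 1 -> wa + wb + wc = 1 -> [/\ va = wa, vb = wb & vc = wc].
Proof.
move=> h1 h2 h3 s1 s2.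
have ea : va - wa = (va * wb - vb * wa) + (va * wc - vc * wa) - va * (wa + wb + wc - 1)
   + wa * (va + vb + vc - 1) by ring.
have eb : vb - wb = - (va * wb - vb * wa) + (vb * wc - vc * wb) - vb * (wa + wb + wc - 1)
   + wb * (va + vb + vc - 1) by ring.
rewrite h1 h2 h3 s1 s2 in ea eb.
split; lra.
Qed.

Lemma lagr (pa pb pc qa qb qc va vb vc wa wb wc ga gb gc : R) :
  va * ga + vb * gb + vc * gc = 0 -> wa * ga + wb * gb + wc * gc = 0 ->
  (pa * ga + pb * gb + pc * gc) *
    (qa * (vb * wc - vc * wb) - qb * (va * wc - vc * wa) + qc * (va * wb - vb * wa)) =
  (qa * ga + qb * gb + qc * gc) *
    (pa * (vb * wc - vc * wb) - pb * (va * wc - vc * wa) + pc * (va * wb - vb * wa)).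
Proof.
move=> h1 h2; apply/eqP; rewrite -subr_eq0; apply/eqP.
transitivity ((wa * ga + wb * gb + wc * gc) *
   (va * (pb * qc - pc * qb) - vb * (pa * qc - pc * qa) + vc * (pa * qb - pb * qa))
 - (va * ga + vb * gb + vc * gc) *
   (wa * (pb * qc - pc * qb) - wb * (pa * qc - pc * qa) + wc * (pa * qb - pb * qa))).
  ring.
by rewrite h1 h2 !mul0r subr0.
Qed.

Lemma seg_id (pz px py vz vx vy wz wx wy : R) :
  pz + px + py = 1 -> vz + vx + vy = 1 -> wz + wx + wy = 1 -> vz = 0 ->
  pz * (vx * wy - vy * wx) - px * (vz * wy - vy * wz) + py * (vz * wx - vx * wz) = 0 ->
  px * wz = (wz - pz) * vx + pz * wx /\ py * wz = (wz - pz) * vy + pz * wy.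
Proof.
move=> s1 s2 s3 vz0 hd.
have epy : py = 1 - pz - px by lra.
have evy : vy = 1 - vx by lra.
have ewy : wy = 1 - wz - wx by lra.
rewrite vz0 epy evy ewy in hd *.
have e : px * wz - ((wz - pz) * vx + pz * wx) =
  pz * (vx * (1 - wz - wx) - (1 - vx) * wx) - px * (0 * (1 - wz - wx) - (1 - vx) * wz) +
  (1 - pz - px) * (0 * wx - vx * wz) by ring.
rewrite hd in e.
split; first by lra.
have e2 : (1 - pz - px) * wz - ((wz - pz) * (1 - vx) + pz * (1 - wz - wx)) =
  - (px * wz - ((wz - pz) * vx + pz * wx)) by ring.
rewrite e in e2; lra.
Qed.

End RealLemmas.
Section Main.
Variables (R : realFieldType) (V : finType) (N : nat) (T : {set {set V}}).
Variable f : 'I_N -> (V -> R) -> R.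
Hypothesis Hlin : forall i D, D \in T -> forall p q, in_simplex D p -> in_simplex D q ->
     forall t : R, 0 <= t -> t <= 1 ->
       f i (fun x => (1 - t) * p x + t * q x) = (1 - t) * f i p + t * f i q.
Variables (i j : 'I_N).
Hypothesis ij : i != j.

Local Notation G p := (f i p - f j p).
Local Notation tau := (i < j)%N.
Local Notation B := (@Bt R (i < j)%N).

Lemma dE p q : diff_order f i j p q <-> B (G p) != B (G q).
Proof.
have E : forall r, ltb (f i r) (f j r) i j = B (G r).
  by move=> r; rewrite /ltb /Bt subr_lt0 subr_eq0.
by rewrite diff_orderE // !E.
Qed.

Lemma dsym p q : diff_order f i j p q -> diff_order f i j q p.
Proof. by rewrite !dE eq_sym. Qed.

Lemma Geq p : f i p = f j p <-> G p = 0.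
Proof. by split => [->|/eqP]; rewrite ?subrr // subr_eq0 => /eqP. Qed.

Lemma Gaff (a b c : V) p : a != b -> b != c -> a != c ->
  [set a; b; c] \in T -> tri3 a b c p ->
  G p = p a * G (vpt R a) + p b * G (vpt R b) + p c * G (vpt R c).
Proof.
move=> ab bc ac HT Hp; rewrite (affine3 Hlin i ab bc ac HT Hp) (affine3 Hlin j ab bc ac HT Hp).
ring.
Qed.

Lemma vpt_in2 (x y z : V) : x != y ->
  in_simplex [set x; y] (vpt R z) <-> (z == x) || (z == y).
Proof.
move=> xy; rewrite in_seg2 //; split.
  case=> _ _ _ H; apply/negPn/negP => /norP[zx zy].
  have := H z; rewrite vptE eqxx /= => /(_ zx zy) /eqP; by rewrite oner_eq0.
have yx : (y == x) = false by rewrite eq_sym (negbTE xy).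
move=> /orP[]/eqP->; split; rewrite ?vptE ?eqxx ?yx ?(negbTE xy) //=;
  rewrite ?ler01 ?lexx ?add0r ?addr0 //; move=> u ux uy; by rewrite vptE ?(negbTE ux) ?(negbTE uy).
Qed.

Lemma det_char (a b c : V) : a != b -> b != c -> a != c ->
  detected_tri f i j a b c (vpt R a) (vpt R b) <->
  [/\ G (vpt R a) = 0, G (vpt R b) = 0 & B (G (vpt R c)) != tau].
Proof.
move=> ab bc ac.
have Bz : forall x, G (vpt R x) = 0 -> B (G (vpt R x)) = tau.
  by move=> x ->; rewrite Bzero.
split; last first.
case=> e1 e2 d; split.
  right; right; split.
  - by apply/dE; rewrite (Bz _ e1) eq_sym.
  - by rewrite vpt_in2 ?eqxx.
  - by apply/Geq.
right; left; split.
- by apply/dE; rewrite (Bz _ e2) eq_sym.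
- by rewrite vpt_in2 ?eqxx.
- by apply/Geq.
  rewrite /detected_tri /detected_edge.
  have ba : (b == a) = false by rewrite eq_sym (negbTE ab).
  have ca : (c == a) = false by rewrite eq_sym (negbTE ac).
  have cb : (c == b) = false by rewrite eq_sym (negbTE bc).
  case=> [[[d1 _ e1]|[[_ h _]|[d1 _ e1]]] [[d2 _ e2]|[[d2 _ e2]|[_ h' _]]]].
  all: try (move: h; rewrite vpt_in2 // ?(negbTE ab) ?(negbTE bc) ?(negbTE ac) ?ba ?ca ?cb //).
  all: try (move: h'; rewrite vpt_in2 // ?(negbTE ab) ?(negbTE bc) ?(negbTE ac) ?ba ?ca ?cb //).
  all: move: e1 e2 d1 d2 => /Geq e1 /Geq e2 /dE d1 /dE d2.
  all: move: d1 d2; rewrite ?(Bz _ e1) ?(Bz _ e2) ?eqxx // => d1 d2; split => //.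
  all: rewrite eq_sym //.
Qed.

Lemma tri_seg (a b c : V) (p : V -> R) : a != b -> b != c -> a != c ->
  tri3 a b c p -> p c = 0 -> in_simplex [set a; b] p.
Proof.
move=> ab bc ac [p1 p2 p3 p4 p5] pc; apply/in_seg2 => //; split => //; first lra.
move=> x xa xb; case: (x =P c) => [->//|/eqP xc]; exact: p5.
Qed.

Lemma seg_tri (a b c : V) (p : V -> R) : a != b -> b != c -> a != c ->
  in_simplex [set a; b] p -> tri3 a b c p /\ p c = 0.
Proof.
move=> ab bc ac /in_seg2 -/(_ ab) [p1 p2 p3 p4].
have pc : p c = 0 by apply: p4; rewrite eq_sym.
split => //; split; rewrite ?pc ?lexx //; first lra.
move=> x xa xb _; exact: p4.
Qed.

Lemma vpt_in3 (a b c : V) : a != b -> b != c -> a != c ->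
  [/\ in_simplex [set a; b; c] (vpt R a), in_simplex [set a; b; c] (vpt R b)
    & in_simplex [set a; b; c] (vpt R c)].
Proof.
move=> ab bc ac; split; apply: (in_tri3 (R:=R) _ ab bc ac).2.
- exact: vpt_tri3.
- do 2 apply: tri3_rot; apply: vpt_tri3; by rewrite // eq_sym.
- apply: tri3_rot; apply: vpt_tri3; by rewrite // eq_sym.
Qed.

Lemma swaps_of (a b c1 c2 : V) : a != b -> b != c1 -> a != c1 -> b != c2 -> a != c2 ->
  [set a; b; c1] \in T -> [set a; b; c2] \in T ->
  G (vpt R a) = 0 -> G (vpt R b) = 0 -> B (G (vpt R c1)) != B (G (vpt R c2)) ->
  swaps_edge f i j a b c1 c2.
Proof.
move=> ab bc1 ac1 bc2 ac2 T1 T2 ea eb d; split.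
  move=> p /(seg_tri ab bc1 ac1) [tp pc]; apply/Geq.
  by rewrite (Gaff ab bc1 ac1 T1 tp) ea eb pc; ring.
have key : forall c, b != c -> a != c -> [set a; b; c] \in T -> forall p,
   in_simplex [set a; b; c] p -> ~ in_simplex [set a; b] p -> B (G p) = B (G (vpt R c)).
  move=> c bc ac Tc p /(in_tri3 _ ab bc ac) tp np.
  have pc : p c != 0 by apply/eqP => pc; apply: np; exact: (tri_seg ab bc ac tp pc).
  have pcp : 0 < p c by case: tp => _ _ h _ _; rewrite lt_neqAle eq_sym pc.
  by rewrite (Gaff ab bc ac Tc tp) ea eb !mulr0 !add0r Bscale.
move=> p1 p2 h1 n1 h2 n2; apply/dE.
by rewrite (key c1 bc1 ac1 T1 p1 h1 n1) (key c2 bc2 ac2 T2 p2 h2 n2).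
Qed.

Lemma part2 (a b c1 c2 : V) : a != b -> b != c1 -> a != c1 -> b != c2 -> a != c2 ->
  [set a; b; c1] \in T -> [set a; b; c2] \in T ->
  (swaps_edge f i j a b c1 c2 <->
        (detected_tri f i j a b c1 (vpt R a) (vpt R b) /\
           ~ detected_tri f i j a b c2 (vpt R a) (vpt R b)) \/
        (~ detected_tri f i j a b c1 (vpt R a) (vpt R b) /\
           detected_tri f i j a b c2 (vpt R a) (vpt R b))).
Proof.
move=> ab bc1 ac1 bc2 ac2 T1 T2.
rewrite !det_char //.
split.
  case=> E1 E2.
  have ea : G (vpt R a) = 0.
    by apply/Geq; apply: E1; apply/vpt_in2; rewrite ?eqxx.
  have eb : G (vpt R b) = 0.
    by apply/Geq; apply: E1; apply/vpt_in2; rewrite ?eqxx ?orbT.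
  have [_ _ i1] := vpt_in3 ab bc1 ac1.
  have [_ _ i2] := vpt_in3 ab bc2 ac2.
  have n1 : ~ in_simplex [set a; b] (vpt R c1).
    rewrite vpt_in2 // eq_sym (negbTE ac1) eq_sym (negbTE bc1) //.
  have n2 : ~ in_simplex [set a; b] (vpt R c2).
    rewrite vpt_in2 // eq_sym (negbTE ac2) eq_sym (negbTE bc2) //.
  have /dE d := E2 _ _ i1 n1 i2 n2.
  have [h|h] := eqVneq (B (G (vpt R c1))) tau.
    right; split; first by case=> _ _ /negP.
    move: d; rewrite h => d; by split => //; rewrite eq_sym.
  left; split; first by split.
  case=> _ _; move: d h.
  by case: (B (G (vpt R c1))); case: (B (G (vpt R c2))); case: tau.
case=> [[[ea eb d1] n2]|[n1 [ea eb d2]]].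
  apply: swaps_of => //.
  have h2 : B (G (vpt R c2)) = tau.
    by apply/eqP; apply/negPn/negP => h; apply: n2.
  by rewrite h2.
apply: swaps_of => //.
have h1 : B (G (vpt R c1)) = tau.
  by apply/eqP; apply/negPn/negP => h; apply: n1.
by rewrite h1 eq_sym.
Qed.
Lemma side_rot (a b c : V) (v w p : V -> R) : side a b c v w p = side b c a v w p.
Proof. rewrite /side; ring. Qed.

Lemma on_seg_sym (v w p : V -> R) : on_seg v w p -> on_seg w v p.
Proof.
case=> t [t0 t1 h]; exists (1 - t); split; first lra; first lra.
move=> x; rewrite h; ring.
Qed.

Lemma zos_core (z x y : V) (v w p : V -> R) : z != x -> x != y -> z != y ->
  tri3 z x y v -> tri3 z x y w -> tri3 z x y p -> v z = 0 ->
  side z x y v w p = 0 ->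
  ~ (v z = 0 /\ w z = 0) -> ~ (v x = 0 /\ w x = 0) -> ~ (v y = 0 /\ w y = 0) ->
  (w z = 0 \/ w x = 0 \/ w y = 0) -> on_seg v w p.
Proof.
move=> zx xy zy [v1 v2 v3 v4 v5] [w1 w2 w3 w4 w5] [p1 p2 p3 p4 p5] vz0 hs nz nx ny wb.
have wzn : w z != 0 by apply/eqP => h; apply: nz.
have wzp : 0 < w z by rewrite lt_neqAle eq_sym wzn.
have [ix iy] := seg_id p4 v4 w4 vz0 hs.
pose t := p z / w z.
have rep : forall u, p u = (1 - t) * v u + t * w u.
  move=> u.
  case: (u =P z) => [->|/eqP uz]; first by rewrite vz0 /t divfK //; ring.
  case: (u =P x) => [->|/eqP ux].
    apply: (mulIf wzn); rewrite ix /t; field; exact: wzn.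
  case: (u =P y) => [->|/eqP uy].
    apply: (mulIf wzn); rewrite iy /t; field; exact: wzn.
  by rewrite (v5 u) // (w5 u) // (p5 u) //; ring.
have t0 : 0 <= t by rewrite /t divr_ge0 // ltW.
exists t; split => //.
case: wb => [h|[h|h]]; first by move: wzn; rewrite h eqxx.
- have vxp : 0 < v x by rewrite lt_neqAle v2 andbT eq_sym; apply/eqP => e; apply: nx.
  have := rep x; rewrite h mulr0 addr0 => e.
  rewrite e in p2; nra.
- have vyp : 0 < v y by rewrite lt_neqAle v3 andbT eq_sym; apply/eqP => e; apply: ny.
  have := rep y; rewrite h mulr0 addr0 => e.
  rewrite e in p3; nra.
Qed.

Lemma zero_on_seg (a b c : V) (v w p : V -> R) : a != b -> b != c -> a != c ->
  tri3 a b c v -> tri3 a b c w -> tri3 a b c p -> side a b c v w p = 0 ->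
  ~ (v a = 0 /\ w a = 0) -> ~ (v b = 0 /\ w b = 0) -> ~ (v c = 0 /\ w c = 0) ->
  (v a = 0 \/ v b = 0 \/ v c = 0) -> (w a = 0 \/ w b = 0 \/ w c = 0) -> on_seg v w p.
Proof.
move=> ab bc ac tv tw tp hs na nb nc vb wb.
case: vb => [h|[h|h]].
- exact: (zos_core ab bc ac tv tw tp h hs na nb nc wb).
- have ca : c != a by rewrite eq_sym.
  have ba : b != a by rewrite eq_sym.
  have hs' : side b c a v w p = 0 by rewrite -side_rot.
  apply: (zos_core bc ca ba (tri3_rot tv) (tri3_rot tw) (tri3_rot tp) h hs' nb nc na).
  tauto.
- have ca : c != a by rewrite eq_sym.
  have cb : c != b by rewrite eq_sym.
  have hs' : side c a b v w p = 0 by rewrite side_rot.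
  apply: (zos_core ca ab cb (tri3_rot (tri3_rot tv)) (tri3_rot (tri3_rot tw))
     (tri3_rot (tri3_rot tp)) h hs' nc na nb).
  tauto.
Qed.

Lemma interior (a b c : V) (v w : V -> R) : a != b -> b != c -> a != c ->
  [set a; b; c] \in T -> tri3 a b c v -> tri3 a b c w -> v <> w ->
  G v = 0 -> G w = 0 ->
  (forall p, tri3 a b c p -> G p = 0 -> on_seg v w p) ->
  v a != 0 -> v b != 0 -> v c != 0 -> False.
Proof.
move=> ab bc ac HT tv tw vw Gv Gw Hs na nb nc.
have [v1 v2 v3 v4 v5] := tv; have [w1 w2 w3 w4 w5] := tw.
have vap : 0 < v a by rewrite lt_neqAle eq_sym na.
have vbp : 0 < v b by rewrite lt_neqAle eq_sym nb.
have vcp : 0 < v c by rewrite lt_neqAle eq_sym nc.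
pose e := v a * v b * v c.
have ep : 0 < e by rewrite /e !mulr_gt0.
have la : v a <= 1 by lra.
have lb : v b <= 1 by lra.
have lc : v c <= 1 by lra.
have bc1 : v b * v c <= 1 by nra.
have ac1 : v a * v c <= 1 by nra.
have ab1 : v a * v b <= 1 by nra.
have ea : e <= v a by rewrite /e -mulrA; nra.
have eb : e <= v b by rewrite /e mulrAC -mulrA; nra.
have ec : e <= v c by rewrite /e; nra.
pose p := fun u => (1 + e) * v u - e * w u.
have tp : tri3 a b c p.
  rewrite /p; split.
  - have : e * w a <= e by apply: ler_piMr; lra.
    nra.
  - have : e * w b <= e by apply: ler_piMr; lra.
    nra.
  - have : e * w c <= e by apply: ler_piMr; lra.
    nra.
  - have -> : (1 + e) * v a - e * w a + ((1 + e) * v b - e * w b) + ((1 + e) * v c - e * w c)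
       = (1 + e) * (v a + v b + v c) - e * (w a + w b + w c) by ring.
    rewrite v4 w4; ring.
  - by move=> u ua ub uc; rewrite v5 // w5 //; ring.
have Gp : G p = 0.
  rewrite (Gaff ab bc ac HT tp).
  move: Gv Gw; rewrite (Gaff ab bc ac HT tv) (Gaff ab bc ac HT tw) => Gv Gw.
  rewrite /p.
  have -> : forall A B C : R,
    ((1 + e) * v a - e * w a) * A + ((1 + e) * v b - e * w b) * B + ((1 + e) * v c - e * w c) * C
    = (1 + e) * (v a * A + v b * B + v c * C) - e * (w a * A + w b * B + w c * C).
    by move=> A B C; ring.
  by rewrite Gv Gw; ring.
case: (Hs p tp Gp) => t [t0 t1 ht].
apply: vw; apply: functional_extensionality => u.
have := ht u; rewrite /p => h.
have h2 : (t + e) * (v u - w u) = 0.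
  have -> : (t + e) * (v u - w u) = ((1 + e) * v u - e * w u) - ((1 - t) * v u + t * w u) by ring.
  by rewrite h subrr.
move/eqP: h2; rewrite mulf_eq0 => /orP[/eqP h3|/eqP h3]; first by lra.
by apply/eqP; rewrite -subr_eq0 h3.
Qed.
Lemma vpt_tri3_all (a b c : V) : a != b -> b != c -> a != c ->
  [/\ tri3 a b c (vpt R a), tri3 a b c (vpt R b) & tri3 a b c (vpt R c)].
Proof.
move=> ab bc ac; split.
- exact: vpt_tri3.
- do 2 apply: tri3_rot; apply: vpt_tri3; by rewrite // eq_sym.
- apply: tri3_rot; apply: vpt_tri3; by rewrite // eq_sym.
Qed.

Lemma tri3_acb (a b c : V) (p : V -> R) : tri3 a b c p -> tri3 a c b p.
Proof. by move=> h; apply: tri3_rot; apply: tri3_swap. Qed.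

Lemma core_detect (a b c : V) (v w : V -> R) : a != b -> b != c -> a != c ->
  [set a; b; c] \in T -> tri3 a b c v -> tri3 a b c w ->
  G v = 0 -> G w = 0 ->
  ~ (G (vpt R a) = 0 /\ G (vpt R b) = 0 /\ G (vpt R c) = 0) ->
  ~ (v a = 0 /\ w a = 0) -> ~ (v b = 0 /\ w b = 0) -> ~ (v c = 0 /\ w c = 0) ->
  (v a = 0 \/ v b = 0 \/ v c = 0) -> (w a = 0 \/ w b = 0 \/ w c = 0) ->
  detected_tri f i j a b c v w.
Proof.
move=> ab bc ac HT tv tw Gv Gw nz na nb nc vb wb.
have ba : b != a by rewrite eq_sym.
have ca : c != a by rewrite eq_sym.
have cb : c != b by rewrite eq_sym.
have Gv' := Gv; have Gw' := Gw.
rewrite (Gaff ab bc ac HT tv) in Gv'; rewrite (Gaff ab bc ac HT tw) in Gw'.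
have [v1 v2 v3 v4 v5] := tv; have [w1 w2 w3 w4 w5] := tw.
have [hp hn] := signs v1 v2 v3 w1 w2 w3 Gv' Gw' nz na nb nc.
set Ga := G (vpt R a) in hp hn nz; set Gb := G (vpt R b) in hp hn nz;
set Gc := G (vpt R c) in hp hn nz.
have de_ab : forall u, tri3 a b c u -> u c = 0 -> G u = 0 -> B Ga != B Gb ->
    detected_edge f i j a b u.
  move=> u tu uc Gu d; split; [exact/dE | exact: tri_seg tu uc | exact/Geq].
have de_bc : forall u, tri3 a b c u -> u a = 0 -> G u = 0 -> B Gb != B Gc ->
    detected_edge f i j b c u.
  move=> u tu ua Gu d; split; [exact/dE | exact: (tri_seg bc ca ba (tri3_rot tu) ua) | exact/Geq].
have de_ac : forall u, tri3 a b c u -> u b = 0 -> G u = 0 -> B Ga != B Gc ->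
    detected_edge f i j a c u.
  move=> u tu ub Gu d; split; [exact/dE | exact: (tri_seg ac cb ab (tri3_acb tu) ub) | exact/Geq].
have pt : forall u, tri3 a b c u -> G u = 0 -> (u a = 0 \/ u b = 0 \/ u c = 0) ->
    detected_edge f i j a b u \/ detected_edge f i j b c u \/ detected_edge f i j a c u.
  move=> u tu Gu ub'.
  have [u1 u2 u3 u4 u5] := tu.
  have Gu' := Gu; rewrite (Gaff ab bc ac HT tu) in Gu'.
  case: ub' => [h|[h|h]].
  - rewrite h mul0r add0r in Gu'.
    have s : u b + u c = 1 by move: u4; rewrite h add0r.
    have hp' : 0 < Gb \/ 0 < Gc \/ 0 < Ga by case: hp => [h1|[h1|h1]]; [right; right|left|right; left].
    have hn' : Gb < 0 \/ Gc < 0 \/ Ga < 0 by case: hn => [h1|[h1|h1]]; [right; right|left|right; left].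
    case: (pick (i < j)%N u2 u3 s Gu' hp' hn') => [d|[[uc d]|[ub d]]].
    + by right; left; apply: de_bc.
    + by left; apply: de_ab => //; rewrite eq_sym.
    + by right; right; apply: de_ac => //; rewrite eq_sym.
  - rewrite h mul0r addr0 in Gu'.
    have s : u a + u c = 1 by move: u4; rewrite h addr0.
    have hp' : 0 < Ga \/ 0 < Gc \/ 0 < Gb by case: hp => [h1|[h1|h1]]; [left|right; right|right; left].
    have hn' : Ga < 0 \/ Gc < 0 \/ Gb < 0 by case: hn => [h1|[h1|h1]]; [left|right; right|right; left].
    case: (pick (i < j)%N u1 u3 s Gu' hp' hn') => [d|[[uc d]|[ua d]]].
    + by right; right; apply: de_ac.
    + by left; apply: de_ab.
    + by right; left; apply: de_bc => //; rewrite eq_sym.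
  - rewrite h mul0r addr0 in Gu'.
    have s : u a + u b = 1 by move: u4; rewrite h addr0.
    case: (pick (i < j)%N u1 u2 s Gu' hp hn) => [d|[[ub d]|[ua d]]].
    + by left; apply: de_ab.
    + by right; right; apply: de_ac.
    + by right; left; apply: de_bc.
by split; apply: pt.
Qed.
Lemma side_vpt (a b c : V) (v w : V -> R) : a != b -> b != c -> a != c ->
  [/\ side a b c v w (vpt R a) = v b * w c - v c * w b,
      side a b c v w (vpt R b) = - (v a * w c - v c * w a)
    & side a b c v w (vpt R c) = v a * w b - v b * w a].
Proof.
move=> ab bc ac.
have ba : (b == a) = false by rewrite eq_sym (negbTE ab).
have ca : (c == a) = false by rewrite eq_sym (negbTE ac).
have cb : (c == b) = false by rewrite eq_sym (negbTE bc).
by split; rewrite /side !vptE ?eqxx ?ba ?ca ?cb ?(negbTE ab) ?(negbTE bc) ?(negbTE ac) /=; ring.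
Qed.

Lemma core_swaps (a b c : V) (v w : V -> R) : a != b -> b != c -> a != c ->
  [set a; b; c] \in T -> tri3 a b c v -> tri3 a b c w -> v <> w ->
  G v = 0 -> G w = 0 ->
  ~ (G (vpt R a) = 0 /\ G (vpt R b) = 0 /\ G (vpt R c) = 0) ->
  ~ (v a = 0 /\ w a = 0) -> ~ (v b = 0 /\ w b = 0) -> ~ (v c = 0 /\ w c = 0) ->
  (v a = 0 \/ v b = 0 \/ v c = 0) -> (w a = 0 \/ w b = 0 \/ w c = 0) ->
  swaps_tri f i j a b c v w.
Proof.
move=> ab bc ac HT tv tw vw Gv Gw nz na nb nc vb wb.
have Gv' := Gv; have Gw' := Gw.
rewrite (Gaff ab bc ac HT tv) in Gv'; rewrite (Gaff ab bc ac HT tw) in Gw'.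
have [v1 v2 v3 v4 v5] := tv; have [w1 w2 w3 w4 w5] := tw.
have [hp hn] := signs v1 v2 v3 w1 w2 w3 Gv' Gw' nz na nb nc.
have [ta tb tc] := vpt_tri3_all ab bc ac.
have [qp [tqp Gqp]] : exists q, tri3 a b c q /\ 0 < G q.
  case: hp => [h|[h|h]]; [exists (vpt R a) | exists (vpt R b) | exists (vpt R c)]; by [].
have [qn [tqn Gqn]] : exists q, tri3 a b c q /\ G q < 0.
  case: hn => [h|[h|h]]; [exists (vpt R a) | exists (vpt R b) | exists (vpt R c)]; by [].
set S := side a b c v w.
have Id : forall p q, tri3 a b c p -> tri3 a b c q -> G p * S q = G q * S p.
  move=> p q tp tq; rewrite /S /side (Gaff ab bc ac HT tp) (Gaff ab bc ac HT tq).
  exact: lagr.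
have Sq : S qp != 0.
  apply/eqP => S0.
  have Z : forall p, tri3 a b c p -> S p = 0.
    move=> p tp; have := Id qp p tqp tp; rewrite S0 mulr0 => /eqP.
    by rewrite mulf_eq0 gt_eqF //= => /eqP.
  have [sa sb sc] := side_vpt v w ab bc ac.
  have za := Z _ ta; have zb := Z _ tb; have zc := Z _ tc.
  rewrite /S sa in za; rewrite /S sb in zb; rewrite /S sc in zc.
  have zb' : v a * w c - v c * w a = 0 by move/eqP: zb; rewrite oppr_eq0 => /eqP.
  have [ea eb ec] := cross0 za zb' zc v4 w4.
  apply: vw; apply: functional_extensionality => u.
  case: (u =P a) => [->//|/eqP ua]; case: (u =P b) => [->//|/eqP ub].
  case: (u =P c) => [->//|/eqP uc]; by rewrite v5 // w5.
have tin : forall p : V -> R, in_simplex [set a; b; c] p <-> tri3 a b c p.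
  by move=> p; exact: (in_tri3 (R:=R) p ab bc ac).
rewrite /swaps_tri; split.
- move=> p /tin tp; split.
    move/Geq => Gp.
    apply: (zero_on_seg ab bc ac tv tw tp) => //.
    have := Id p qp tp tqp; rewrite Gp mul0r => /esym/eqP.
    by rewrite mulf_eq0 gt_eqF //= => /eqP.
  case=> t [t0 t1 ht]; apply/Geq.
  rewrite (Gaff ab bc ac HT tp) !ht.
  have -> : forall A B C : R,
    ((1 - t) * v a + t * w a) * A + ((1 - t) * v b + t * w b) * B + ((1 - t) * v c + t * w c) * C
    = (1 - t) * (v a * A + v b * B + v c * C) + t * (w a * A + w b * B + w c * C).
    by move=> A B C; ring.
  by rewrite Gv' Gw'; ring.
- case: (ltgtP (S qp) 0) => hs; last by move: Sq; rewrite hs eqxx.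
  + exists qn; split; first exact/tin.
    have e := Id qp qn tqp tqn.
    have h : 0 < G qn * S qp by rewrite nmulr_rgt0.
    by move: h; rewrite -e pmulr_rgt0.
  + by exists qp; split; first exact/tin.
- case: (ltgtP (S qp) 0) => hs; last by move: Sq; rewrite hs eqxx.
  + by exists qp; split; first exact/tin.
  + exists qn; split; first exact/tin.
    have e := Id qp qn tqp tqn.
    have h : G qn * S qp < 0 by rewrite nmulr_rlt0.
    by move: h; rewrite -e pmulr_rlt0.
- move=> p1 p2 /tin t1 /tin t2 s1 s2; apply/dE.
  have e1 := Id p1 qp t1 tqp; have e2 := Id p2 qp t2 tqp.
  have h1 : 0 < G p1 * S qp by rewrite e1 mulr_gt0.
  have h2 : G p2 * S qp < 0 by rewrite e2 pmulr_rlt0.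
  case: (ltgtP (S qp) 0) => hs; last by move: Sq; rewrite hs eqxx.
  + have g1 : G p1 < 0 by move: h1; rewrite mulrC nmulr_rgt0.
    have g2 : 0 < G p2 by move: h2; rewrite mulrC nmulr_rlt0.
    by rewrite (Bneg _ g1) (Bpos _ g2).
  + have g1 : 0 < G p1 by move: h1; rewrite mulrC pmulr_rgt0.
    have g2 : G p2 < 0 by move: h2; rewrite mulrC pmulr_rlt0.
    by rewrite (Bneg _ g2) (Bpos _ g1).
Qed.
Lemma part1 (a b c : V) (v w : V -> R) : a != b -> b != c -> a != c ->
  [set a; b; c] \in T ->
  in_simplex [set a; b; c] v -> in_simplex [set a; b; c] w -> v <> w ->
  ~ (exists2 e, is_edge T e & in_simplex e v /\ in_simplex e w) ->
  (swaps_tri f i j a b c v w <-> detected_tri f i j a b c v w).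
Proof.
move=> ab bc ac HT /(in_tri3 _ ab bc ac) tv /(in_tri3 _ ab bc ac) tw vw He.
have ba : b != a by rewrite eq_sym.
have ca : c != a by rewrite eq_sym.
have cb : c != b by rewrite eq_sym.
have edge : forall x y, x != y -> [set x; y] \subset [set a; b; c] -> is_edge T [set x; y].
  move=> x y xy sub; split; first by rewrite cards2 xy.
  by exists [set a; b; c].
have nc : ~ (v c = 0 /\ w c = 0).
  case=> h1 h2; apply: He; exists [set a; b].
    apply: (edge a b ab) => //; apply/subsetP => x; rewrite !inE; case/orP => h; by rewrite h ?orbT.
  by split; [apply: (tri_seg ab bc ac tv h1) | apply: (tri_seg ab bc ac tw h2)].
have na : ~ (v a = 0 /\ w a = 0).
  case=> h1 h2; apply: He; exists [set b; c].
    apply: (edge b c bc) => //; apply/subsetP => x; rewrite !inE; case/orP => h; by rewrite h ?orbT.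
  by split; [apply: (tri_seg bc ca ba (tri3_rot tv) h1) | apply: (tri_seg bc ca ba (tri3_rot tw) h2)].
have nb : ~ (v b = 0 /\ w b = 0).
  case=> h1 h2; apply: He; exists [set a; c].
    apply: (edge a c ac) => //; apply/subsetP => x; rewrite !inE; case/orP => h; by rewrite h ?orbT.
  by split; [apply: (tri_seg ac cb ab (tri3_acb tv) h1) | apply: (tri_seg ac cb ab (tri3_acb tw) h2)].
have tin : forall p : V -> R, in_simplex [set a; b; c] p <-> tri3 a b c p.
  by move=> p; exact: (in_tri3 (R:=R) p ab bc ac).
have [ta tb tc] := vpt_tri3_all ab bc ac.
split.
  case=> S1 [p1 [P1 s1]] [p2 [P2 s2]] S4.
  have Gv : G v = 0.
    apply/Geq; apply: (proj2 (S1 v ((tin v).2 tv))); exists 0; split; rewrite ?lexx ?ler01 //.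
    by move=> x; ring.
  have Gw : G w = 0.
    apply/Geq; apply: (proj2 (S1 w ((tin w).2 tw))); exists 1; split; rewrite ?lexx ?ler01 //.
    by move=> x; ring.
  have nz : ~ (G (vpt R a) = 0 /\ G (vpt R b) = 0 /\ G (vpt R c) = 0).
    case=> za [zb zc].
    have := S4 p1 p2 P1 P2 s1 s2; rewrite dE.
    rewrite (Gaff ab bc ac HT ((tin _).1 P1)) (Gaff ab bc ac HT ((tin _).1 P2)) za zb zc.
    by rewrite !mulr0 !addr0 eqxx.
  have Hs : forall p, tri3 a b c p -> G p = 0 -> on_seg v w p.
    by move=> p tp /Geq; apply: (proj1 (S1 p ((tin p).2 tp))).
  have Hs' : forall p, tri3 a b c p -> G p = 0 -> on_seg w v p.
    by move=> p tp Gp; apply: on_seg_sym; apply: Hs.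
  have vb : v a = 0 \/ v b = 0 \/ v c = 0.
    have [h|h] := eqVneq (v a) 0; first by left.
    have [h'|h'] := eqVneq (v b) 0; first by right; left.
    have [h''|h''] := eqVneq (v c) 0; first by right; right.
    by exfalso; apply: (interior ab bc ac HT tv tw vw Gv Gw Hs h h' h'').
  have wb : w a = 0 \/ w b = 0 \/ w c = 0.
    have [h|h] := eqVneq (w a) 0; first by left.
    have [h'|h'] := eqVneq (w b) 0; first by right; left.
    have [h''|h''] := eqVneq (w c) 0; first by right; right.
    by exfalso; apply: (interior ab bc ac HT tw tv (fun e => vw (esym e)) Gw Gv Hs' h h' h'').
  exact: core_detect.
have info : forall u, tri3 a b c u ->
  (detected_edge f i j a b u \/ detected_edge f i j b c u \/ detected_edge f i j a c u) ->
  [/\ G u = 0, (u a = 0 \/ u b = 0 \/ u c = 0) &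
      ~ (G (vpt R a) = 0 /\ G (vpt R b) = 0 /\ G (vpt R c) = 0)].
  move=> u tu [[d hs /Geq e]|[[d hs /Geq e]|[d hs /Geq e]]]; split => //; move/dE: d => d.
  - by right; right; case: (seg_tri ab bc ac hs).
  - by case=> za [zb zc]; move: d; rewrite za zb eqxx.
  - by left; case: (seg_tri bc ca ba hs).
  - by case=> za [zb zc]; move: d; rewrite zc zb eqxx.
  - by right; left; case: (seg_tri ac cb ab hs).
  - by case=> za [zb zc]; move: d; rewrite za zc eqxx.
case=> Dv Dw.
have [Gv vb nz] := info v tv Dv.
have [Gw wb _] := info w tw Dw.
exact: core_swaps.
Qed.

End Main.

Theorem lemmaA3 (R : realFieldType) (U V : finType) (N : nat)
  (sig : 'I_N -> {set U}) (T : {set {set V}}) (f : 'I_N -> (V -> R) -> R) :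
  indexed_complex sig ->
  triangulated_surface T ->
  pl_fibered_filtration sig T f ->
  forall i j : 'I_N, i != j ->
  (* 1. the segment lies in a unique triangle {a,b,c} *)
  (forall (a b c : V) (v w : V -> R),
     [set a; b; c] \in T ->
     in_simplex [set a; b; c] v -> in_simplex [set a; b; c] w -> v <> w ->
     ~ (exists2 e, is_edge T e & in_simplex e v /\ in_simplex e w) ->
     (swaps_tri f i j a b c v w <-> detected_tri f i j a b c v w)) /\
  (* 2. (v,w) = (a,b) is an interior edge with adjacent triangles {a,b,c1}, {a,b,c2} *)
  (forall a b c1 c2 : V,
     c1 != c2 -> [set a; b; c1] \in T -> [set a; b; c2] \in T ->
     (swaps_edge f i j a b c1 c2 <->
        (detected_tri f i j a b c1 (vpt R a) (vpt R b) /\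
           ~ detected_tri f i j a b c2 (vpt R a) (vpt R b)) \/
        (~ detected_tri f i j a b c1 (vpt R a) (vpt R b) /\
           detected_tri f i j a b c2 (vpt R a) (vpt R b)))).
Proof.
move=> _ [Hcard _ _] [_ Hlin] i j ij; split.
- move=> a b c v w HT Hv Hw vw He.
  have [ab bc ac] := card3_distinct (Hcard _ HT).
  exact: (part1 Hlin ij ab bc ac HT Hv Hw vw He).
- move=> a b c1 c2 _ T1 T2.
  have [ab bc1 ac1] := card3_distinct (Hcard _ T1).
  have [_ bc2 ac2] := card3_distinct (Hcard _ T2).
  exact: (part2 Hlin ij ab bc1 ac1 bc2 ac2 T1 T2).
Qed.
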